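(* Let $\xi$ be a transcendental real number. For every positive integer $k$, $$(k+1) \bigl( 1 + \lambda_{k+1} (\xi) \bigr) \ge k \bigl( 1 + \lambda_k (\xi) \bigr).$$ Consequently, for every integer $n \ge k$, $$\lambda_n (\xi) \ge \frac{k \lambda_k (\xi) - n + k}{n}.$$
   Context: For an integer $n \ge 1$ and a real number $\xi$, $\lambda_n(\xi)$ denotes the supremum (possibly $+\infty$) of the real numbers $\lambda$ such that, for arbitrarily large real numbers $X$, the inequalities $0 < |x_0| \le X$, $\max_{1 \le m \le n} |x_0 \xi^m - x_m| \le X^{-\lambda}$ have a solution in integers $x_0, \ldots, x_n$. The inequalities are understood in the extended reals (if $\lambda_k(\xi)=+\infty$ then the right-hand sides are $+\infty$). *)

(* Defs.v *)
From HB Require Import structures.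
From mathcomp Require Import all_boot all_order all_algebra.
From mathcomp Require Import all_classical all_reals all_analysis.
Set Implicit Arguments. Unset Strict Implicit. Unset Printing Implicit Defensive.
Import Order.TTheory GRing.Theory Num.Theory.
Local Open Scope classical_set_scope.
Local Open Scope ring_scope.

Definition transcendental (R : realType) (xi : R) : Prop :=
  forall p : {poly int}, p != 0 -> (map_poly (fun z : int => z%:~R : R) p).[xi] != 0.

Definition lambda_set (R : realType) (n : nat) (xi : R) : set R :=
  [set lam | forall X0 : R, exists X : R, X0 <= X /\
     exists (x0 : int) (x : nat -> int),
       x0 != 0 /\ `|(x0%:~R : R)| <= X /\
       forall m : nat, (1 <= m <= n)%N ->
         `|(x0%:~R : R) * xi ^+ m - (x m)%:~R| <= X `^ (- lam)].

Definition lambda_exp (R : realType) (n : nat) (xi : R) : \bar R :=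
  ereal_sup [set r%:E | r in lambda_set n xi].

(* Main.v *)
Require Import Defs.
From HB Require Import structures.
From mathcomp Require Import all_boot all_order all_algebra.
From mathcomp Require Import all_classical all_reals all_analysis.
From mathcomp Require Import zify ring lra.
Import Order.TTheory GRing.Theory Num.Theory.
Local Open Scope ring_scope.

Lemma sum_bound_int (k N S : nat) (g : 'I_k.+1 -> 'I_N.+1) (v : nat -> int) :
  (forall j, (j <= k)%N -> (`|v j| <= S)%N) ->
  `|\sum_(j < k.+1) (g j : nat)%:Z * v j| <= (k.+1 * S * N)%N%:Z.
Proof.
move=> hv.
apply: (le_trans (ler_norm_sum _ _ _)).
have -> : ((k.+1 * S * N)%N%:Z) = \sum_(j < k.+1) (S * N)%N%:Z.
  by rewrite sumr_const card_ord -mulr_natr natz -PoszM; congr Posz; lia.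
apply: ler_sum => j _.
rewrite normrM.
have h1 : `|((g j : nat)%:Z)| <= N%:Z.
  by rewrite -abszE /= lez_nat -ltnS ltn_ord.
have h2 : `|v j| <= S%:Z by rewrite -abszE lez_nat hv // -ltnS ltn_ord.
rewrite PoszM mulrC.
by apply: ler_pM => //.
Qed.

Lemma siegel (k N S : nat) (v : nat -> int) :
  (forall j, (j <= k)%N -> (`|v j| <= S)%N) ->
  ((2 * (k.+1 * S * N)).+1 < (N.+1)^k.+1)%N ->
  exists q : nat -> int, (exists j, (j <= k)%N /\ q j != 0) /\
    (forall j, `|q j| <= N%:Z) /\ \sum_(j < k.+1) q j * v j = 0.
Proof.
move=> hv hN.
set B := (k.+1 * S * N)%N.
pose T := {ffun 'I_k.+1 -> 'I_N.+1}.
pose s (g : T) : int := \sum_(j < k.+1) (g j : nat)%:Z * v j.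
pose f (g : T) : 'I_(2 * B).+1 := inord (absz (s g + B%:Z)).
have hs : forall g : T, `|s g| <= B%:Z by move=> g; exact: sum_bound_int.
have hb : forall g : T, - (B%:Z) <= s g <= B%:Z.
  by move=> g; rewrite -ler_norml hs.
have hf : forall g, (absz (s g + B%:Z)%R <= 2 * B)%N.
  move=> g; have /andP[h1 h2] := hb g.
  rewrite -lez_nat abszE ger0_norm; last by rewrite -lerBlDr sub0r.
  rewrite PoszM; lia.
have : ~~ injectiveb f.
  apply/negP => /injectiveP hinj.
  have := leq_card f hinj.
  rewrite card_ffun !card_ord => h.
  by move: (leq_trans hN h); rewrite ltnn.
case/injectivePn => g1 [g2 hne heq].
have hs12 : s g1 = s g2.
  move/(congr1 val): heq; rewrite /f /= !inordK; last 2 first.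
  - by rewrite ltnS hf.
  - by rewrite ltnS hf.
  move=> habs.
  have e1 : 0 <= s g1 + B%:Z by have /andP[h1 _] := hb g1; rewrite -lerBlDr sub0r.
  have e2 : 0 <= s g2 + B%:Z by have /andP[h1 _] := hb g2; rewrite -lerBlDr sub0r.
  have : (s g1 + B%:Z) = (s g2 + B%:Z) by rewrite -[LHS]gez0_abs // -[RHS]gez0_abs // habs.
  by move/addIr.
exists (fun j => (g1 (inord j) : nat)%:Z - (g2 (inord j) : nat)%:Z).
split; last split.
- have [i hi] : exists i, g1 i != g2 i.
    apply/existsP; apply: contraR hne => /existsPn h; apply/eqP/ffunP => i.
    by apply/eqP; have := h i; rewrite negbK.
  exists i; split; first by rewrite -ltnS ltn_ord.
  by rewrite inord_val subr_eq0; apply: contra hi => /eqP [] /val_inj ->.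
- move=> j; have h1 := ltn_ord (g1 (inord j)); have h2 := ltn_ord (g2 (inord j)).
  move: (nat_of_ord (g1 _)) (nat_of_ord (g2 _)) h1 h2 => a b ha hb2.
  rewrite -abszE lez_nat; lia.
- under eq_bigr => j _ do rewrite inord_val mulrBl.
  by rewrite sumrB -/(s g1) -/(s g2) hs12 subrr.
Qed.
Lemma key_identity (R : comRingType) (xi x0 : R) (q xx : nat -> R) (k d s : nat) :
  (d <= k)%N -> (s + d = k.+1)%N -> (forall j, (d < j <= k)%N -> q j = 0) ->
  \sum_(j < k.+1) q j * xx j = 0 ->
  q d * x0 * xi ^+ k.+1 + \sum_(j < d) q j * xx (j + s)%N =
  xi ^+ s * \sum_(j < k.+1) q j * (x0 * xi ^+ j - xx j)
  - \sum_(j < d) q j * (x0 * xi ^+ (j + s)%N - xx (j + s)%N).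
Proof.
move=> hdk hsd hq hsum.
have e1 : \sum_(j < k.+1) q j * (x0 * xi ^+ j - xx j) = x0 * \sum_(j < k.+1) q j * xi ^+ j.
  under eq_bigr => j _ do rewrite mulrBr.
  rewrite sumrB hsum subr0 mulr_sumr; apply: eq_bigr => j _; ring.
have e2 : \sum_(j < k.+1) q j * xi ^+ j = \sum_(j < d) q j * xi ^+ j + q d * xi ^+ d.
  rewrite -(big_mkord xpredT (fun j => q j * xi ^+ j)).
  rewrite (big_cat_nat (n := d.+1)) //=; try by [|lia].
  rewrite big_nat_recr //= big_mkord.
  rewrite [X in _ + _ + X]big1_seq ?addr0 //.
  move=> j /andP[_]; rewrite mem_index_iota => /andP[h1 h2].
  by rewrite hq ?mul0r // h1 -ltnS h2.
have e3 : \sum_(j < d) q j * (x0 * xi ^+ (j + s)%N - xx (j + s)%N) =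
   xi ^+ s * (x0 * \sum_(j < d) q j * xi ^+ j) - \sum_(j < d) q j * xx (j + s)%N.
  under eq_bigr => j _ do rewrite mulrBr.
  rewrite sumrB; congr (_ - _).
  rewrite !mulr_sumr; apply: eq_bigr => j _; rewrite exprD; ring.
rewrite e1 e2 e3 -hsd exprD; ring.
Qed.


Lemma le0_in (R : realType) (n : nat) (xi lam : R) : lam <= 0 -> lambda_set n xi lam.
Proof.
move=> hl X0; exists (Num.max X0 1); split; first by rewrite le_max lexx.
exists 1, (fun m => Num.floor (xi ^+ m)); split; first by [].
split; first by rewrite mulr1z normr1 le_max lexx orbT.
move=> m _; rewrite mulr1z mul1r.
have h1 := floor_le (xi ^+ m).
have h2 := lt_succ_floor (xi ^+ m).
rewrite intrD mulr1z in h2.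
rewrite ger0_norm ?subr_ge0 //.
apply: (le_trans (y := 1)); first by rewrite lerBlDl ltW.
rewrite -[X in X <= _](powRr0 (Num.max X0 1)); apply: ler_powR; first by rewrite le_max lexx orbT.
by rewrite oppr_ge0.
Qed.

Lemma aux_ineq (P N : nat) : (1 <= N)%N -> ((2 * (P * N)).+2 <= N.+1 * (2 * P).+1)%N.
Proof. move=> h; rewrite mulnS mulnC; nia. Qed.

Lemma main_step (R : realType) (xi : R) (k : nat) (lam mu : R) :
  (0 < k)%N -> lambda_set k xi lam -> mu < (k%:R * lam - 1) / k.+1%:R ->
  lambda_set k.+1 xi mu.
Proof.
move=> hk hlam hmu.
have [mu0|mu0] := leP mu 0; first exact: le0_in.
have hk0 : 0 < k%:R :> R by rewrite ltr0n.
have hk1 : 0 < k.+1%:R :> R by rewrite ltr0n.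
have hlam1 : 1 < k%:R * lam.
  have : 0 < (k%:R * lam - 1) / k.+1%:R by apply: lt_trans hmu.
  by rewrite pmulr_lgt0 ?invr_gt0 // subr_gt0.
have lam0 : 0 < lam.
  by rewrite -(pmulr_rgt0 _ hk0); apply: lt_trans hlam1.
set B := (1 + `|xi|) ^+ k.+1.
have B1 : 1 <= B by rewrite exprn_ege1 // lerDl.
set C := 4 * (k.+1%:R) ^+ 2 * B + 1.
have C1 : 1 <= C by rewrite lerDr mulr_ge0 // ?mulr_ge0 // ?exprn_ge0 //; apply: le_trans B1.
set D := C + 1.
have D1 : 1 <= D by rewrite /D; lra.
set E := 2 * k.+1%:R * B.
have E1 : 1 <= E.
  rewrite /E; have : 1 <= k.+1%:R :> R by rewrite ler1n.
  move=> h; nra.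
set kinv := (k%:R)^-1 : R.
have kinv0 : 0 < kinv by rewrite invr_gt0.
have kinv1 : kinv <= 1 by rewrite invf_le1 // ler1n.
set gam := lam - kinv - (1 + kinv) * mu.
have gam0 : 0 < gam.
  have -> : gam = ((k%:R * lam - 1) - k.+1%:R * mu) / k%:R.
    rewrite /gam /kinv -natr1; field; by rewrite lt0r_neq0.
  apply: divr_gt0 => //; rewrite subr_gt0 mulrC -ltr_pdivlMr //.
set K := E * D * D `^ mu.
have K0 : 0 < K.
  have D0 : 0 < D by apply: lt_le_trans D1.
  have E0 : 0 < E by apply: lt_le_trans E1.
  by apply: mulr_gt0; [apply: mulr_gt0 | apply: powR_gt0].
move=> Y0.
have [X [hXX1 [x0 [x [hx0 [hx0X hx]]]]]] := hlam (Num.max Y0 (Num.max 1 (K `^ gam^-1))).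
have X1 : 1 <= X by move: hXX1; rewrite !ge_max => /and3P[].
have XY0 : Y0 <= X by move: hXX1; rewrite !ge_max => /and3P[].
have XK : K <= X `^ gam.
  have h : K `^ gam^-1 <= X by move: hXX1; rewrite !ge_max => /and3P[].
  have -> : K = (K `^ gam^-1) `^ gam.
    by rewrite -powRrM mulVf ?powRr1 ?(ltW K0) // lt0r_neq0.
  apply: ge0_ler_powR => //; first exact: ltW.
  - by rewrite nnegrE powR_ge0.
  - by rewrite nnegrE; apply: le_trans X1.
set del := X `^ (- lam).
have del0 : 0 <= del by apply: powR_ge0.
have del1 : del <= 1.
  rewrite /del -[X in _ <= X](powRr0 X); apply: ler_powR => //.
  by rewrite oppr_le0 ltW.
pose xx j : int := if j == 0%N then x0 else x j.
have he : forall j, (j <= k)%N -> `|x0%:~R * xi ^+ j - (xx j)%:~R| <= del.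
  case=> [|j] hj; first by rewrite /xx /= expr0 mulr1 subrr normr0.
  by apply: hx.
have hxi : forall j, (j <= k.+1)%N -> `|xi| ^+ j <= B.
  move=> j hj; apply: (le_trans (y := (1 + `|xi|) ^+ j)).
    by apply: lerXn2r; rewrite ?nnegrE ?addr_ge0 // lerDr.
  by apply: ler_weXn2l => //; rewrite lerDl.
have hxx : forall j, (j <= k)%N -> `|(xx j)%:~R : R| <= X * B + 1.
  move=> j hj.
  have -> : (xx j)%:~R = x0%:~R * xi ^+ j - (x0%:~R * xi ^+ j - (xx j)%:~R) :> R by ring.
  apply: (le_trans (ler_normB _ _)); apply: lerD; last exact: le_trans (he _ hj) del1.
  rewrite normrM normrX; apply: ler_pM => //.
  by apply: hxi; apply: leqW.
set S := (\sum_(j < k.+1) absz (xx j))%N.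
have hS : forall j, (j <= k)%N -> (absz (xx j) <= S)%N.
  move=> j hj; have hj' : (j < k.+1)%N by [].
  by rewrite /S (bigD1 (Ordinal hj')) //= leq_addr.
have hSR : S%:R <= k.+1%:R * (X * B + 1) :> R.
  rewrite /S natr_sum.
  apply: (le_trans (y := \sum_(j < k.+1) (X * B + 1))); last first.
    by rewrite sumr_const card_ord mulr_natl.
  apply: ler_sum => j _; rewrite natr_absz intr_norm; apply: hxx.
  by rewrite -ltnS ltn_ord.
set A := (2 * k.+1 * S).+1.
have hAN : exists N, (A <= N ^ k)%N.
  by exists A; rewrite -{1}(expn1 A); apply: leq_pexp2l.
case: (ex_minnP hAN) => N hN hNmin.
have N1 : (1 <= N)%N.
  case: (N) hN => // ; rewrite exp0n //.
have hNm : (N.-1 ^ k < A)%N.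
  rewrite ltnNge; apply/negP => /hNmin; by case: (N) N1 => // n _ /=; rewrite ltnn.
have hsieg : ((2 * (k.+1 * S * N)).+1 < (N.+1) ^ k.+1)%N.
  have h1 : (N ^ k <= N.+1 ^ k)%N by rewrite leq_exp2r.
  rewrite expnS.
  have h2 : (N.+1 * A <= N.+1 * N.+1 ^ k)%N by rewrite leq_mul2l; apply: leq_trans h1.
  apply: leq_trans h2; rewrite /A -[(2 * k.+1 * S)%N]mulnA; exact: aux_ineq.
have [q [[j0 [hj0 hqj0]] [hqN hqsum]]] := @siegel k N S xx hS hsieg.
set t := X `^ kinv.
have X0 : 0 < X by apply: lt_le_trans X1.
have t1 : 1 <= t.
  rewrite /t -[X in X <= _](powRr0 X); apply: ler_powR => //; exact: ltW.
have hAR : A%:R <= C * X :> R.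
  rewrite /A -addn1 natrD !natrM mulr1n.
  have hB0 : 0 <= B by apply: le_trans B1.
  have hXB : 1 <= X * B by rewrite -[1]mul1r; apply: ler_pM.
  have hk2 : 0 <= k.+1%:R :> R by [].
  rewrite /C.
  have : 2 * k.+1%:R * S%:R <= 2 * k.+1%:R * (k.+1%:R * (X * B + 1)) :> R.
    by apply: ler_wpM2l => //; rewrite mulr_ge0.
  move=> h; apply: (le_trans (lerD h (lexx 1))).
  have : k.+1%:R * (X * B + 1) <= k.+1%:R * (2 * X * B) :> R.
    by apply: ler_wpM2l => //; nra.
  move=> h'; nra.
have hNR : N%:R <= D * t :> R.
  have hA0 : 0 <= A%:R :> R by [].
  have h1 : (N.-1)%:R < A%:R `^ kinv :> R.
    rewrite ltNge; apply/negP => h.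
    have : (A%:R `^ kinv) ^+ k <= (N.-1)%:R ^+ k :> R.
      by apply: lerXn2r => //; rewrite nnegrE ?powR_ge0.
    have h3 : (A%:R `^ kinv) ^+ k = A%:R :> R.
      rewrite -powR_mulrn; last exact: powR_ge0.
      by rewrite -powRrM mulVf ?lt0r_neq0 // powRr1.
    by rewrite h3 -natrX ler_nat leqNgt hNm.
  have h2 : A%:R `^ kinv <= C * t :> R.
    apply: (le_trans (y := (C * X) `^ kinv)).
      have C0 : 0 <= C by apply: le_trans C1.
      apply: ge0_ler_powR; [exact: ltW | by rewrite nnegrE | | exact: hAR].
      by rewrite nnegrE mulr_ge0 //; apply: ltW.
    rewrite powRM //; [|apply: le_trans C1 => // | exact: ltW].
    apply: ler_wpM2r; first exact: powR_ge0.
    by apply: ler1_powR.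
  have -> : N = (N.-1).+1 by case: (N) N1.
  rewrite -addn1 natrD /D; lra.
pose P j := ((j <= k)%N && (q j != 0)).
have hexP : exists j, P j by exists j0; rewrite /P hj0 hqj0.
have hubP : forall j, P j -> (j <= k)%N by move=> j /andP[].
case: (ex_maxnP hexP hubP) => d /andP[hdk hqd] hmax.
have hq0 : forall j, (d < j <= k)%N -> q j = 0.
  move=> j /andP[h1 h2]; apply/eqP; apply: contraTT h1 => h.
  by rewrite -leqNgt; apply: hmax; rewrite /P h2 h.
have d1 : (0 < d)%N.
  rewrite lt0n; apply/negP => /eqP d0.
  move: hqsum; rewrite big_ord_recl big1 ?addr0; last first.
    move=> i _; rewrite hq0 ?mul0r // lift0 d0 /=.
    exact: ltn_ord.
  by move/eqP; rewrite mulf_eq0 /xx /= -d0 (negbTE hqd) (negbTE hx0).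
set a := q d.
set s := (k.+1 - d)%N.
have hsd : (s + d = k.+1)%N by rewrite /s subnK // leqW.
have hqR : forall j, `|(q j)%:~R : R| <= N%:R.
  by move=> j; rewrite -intr_norm -mulrz_nat ler_int natz.
have D0 : 0 < D by apply: lt_le_trans D1.
have t0 : 0 < t by apply: lt_le_trans t1.
have Dt1 : 1 <= D * t by rewrite -[1]mul1r; apply: ler_pM.
have N0 : 0 <= N%:R :> R by [].
have E0 : 0 < E by apply: lt_le_trans E1.
have hfin : E * N%:R * del <= (D * X * t) `^ (- mu).
  apply: (le_trans (y := E * (D * t) * del)).
    apply: ler_wpM2r => //; apply: ler_wpM2l => //; exact: ltW.
  have e1 : t * del = X `^ (- ((1 + kinv) * mu)) * (X `^ gam)^-1.
    rewrite /t /del -powRN -!powRD ?lt0r_neq0 ?implybT //; congr (X `^ _).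
    by rewrite /gam; ring.
  have e2 : (D * X * t) `^ (- mu) = (D `^ mu)^-1 * X `^ (- ((1 + kinv) * mu)).
    have D0' : 0 <= D by apply: ltW.
    have X0' : 0 <= X by apply: ltW.
    rewrite powRM; [|exact: mulr_ge0 | exact: powR_ge0].
    rewrite powRM // powRN -mulrA.
    rewrite /t -powRrM -powRD ?lt0r_neq0 ?implybT //; congr (_ * X `^ _).
    by ring.
  have -> : E * (D * t) * del = E * D * (t * del) by ring.
  rewrite e1 e2.
  have hXg : (X `^ gam)^-1 <= K^-1.
    by rewrite lef_pV2 ?posrE ?powR_gt0.
  have hK : E * D * K^-1 = (D `^ mu)^-1.
    rewrite /K invfM mulrA mulfV ?mul1r //; apply: lt0r_neq0.
    by apply: mulr_gt0.
  rewrite -hK.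
  set Xa := X `^ _.
  have -> : E * D * K^-1 * Xa = (E * D) * (K^-1 * Xa) by ring.
  apply: ler_wpM2l; first by rewrite mulr_ge0 // ltW.
  rewrite [X in _ <= X]mulrC; apply: ler_wpM2l => //; exact: powR_ge0.
have haR : `|(a%:~R : R)| <= D * t by apply: le_trans (hqR d) hNR.
exists (D * X * t); split.
  apply: (le_trans XY0); rewrite -[X in X <= _]mul1r -mulrA [X * t]mulrC mulrA.
  by apply: ler_wpM2r => //; apply: ltW.
exists (a * x0), (fun m => if (m <= k)%N then a * x m else - \sum_(j < d) q j * xx (j + s)%N).
split; first by rewrite mulf_neq0.
split.
  rewrite intrM normrM.
  have -> : D * X * t = (D * t) * X by ring.
  by apply: ler_pM.
move=> m /andP[m1 mk]; apply: le_trans hfin.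
case: ifP => hmk.
  have -> : (a * x0)%:~R * xi ^+ m - (a * x m)%:~R = (a%:~R : R) * (x0%:~R * xi ^+ m - (x m)%:~R).
    by rewrite !intrM; ring.
  rewrite normrM.
  apply: (le_trans (y := N%:R * del)).
    apply: ler_pM => //; first exact: hqR.
    by apply: hx; rewrite m1 hmk.
  by rewrite -mulrA ler_peMl // mulr_ge0.
have hm : m = k.+1 by apply/eqP; rewrite eqn_leq mk leqNgt ltnS hmk.
rewrite hm.
have hsumR : \sum_(j < k.+1) (q j)%:~R * (xx j)%:~R = 0 :> R.
  transitivity ((\sum_(j < k.+1) q j * xx j)%:~R : R); last by rewrite hqsum.
  by rewrite rmorph_sum; apply: eq_bigr => j _; rewrite rmorphM.
have hq0' : forall j, (d < j <= k)%N -> (q j)%:~R = 0 :> R by move=> j hj; rewrite hq0.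
have hid := @key_identity R xi (x0%:~R) (fun j => (q j)%:~R) (fun j => (xx j)%:~R) k d s hdk hsd hq0' hsumR.
have -> : (a * x0)%:~R * xi ^+ k.+1 - (- \sum_(j < d) q j * xx (j + s)%N)%:~R =
   (q d)%:~R * x0%:~R * xi ^+ k.+1 + \sum_(j < d) (q j)%:~R * (xx (j + s)%N)%:~R :> R.
  rewrite rmorphN opprK intrM rmorph_sum; congr (_ + _).
  by apply: eq_bigr => j _; rewrite rmorphM.
rewrite hid.
set w := N%:R * del.
have w0 : 0 <= w by rewrite mulr_ge0.
have b1 : `|\sum_(j < k.+1) (q j)%:~R * (x0%:~R * xi ^+ j - (xx j)%:~R)| <= k.+1%:R * w :> R.
  have -> : k.+1%:R * w = \sum_(j < k.+1) w by rewrite sumr_const card_ord mulr_natl.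
  apply: le_trans (ler_norm_sum _ _ _) _; apply: ler_sum => j _.
  rewrite /w normrM; apply: ler_pM; [exact: normr_ge0 | exact: normr_ge0 | exact: hqR | ].
  by apply: he; rewrite -ltnS ltn_ord.
have b2 : `|\sum_(j < d) (q j)%:~R * (x0%:~R * xi ^+ (j + s)%N - (xx (j + s)%N)%:~R)| <= d%:R * w :> R.
  have -> : d%:R * w = \sum_(j < d) w by rewrite sumr_const card_ord mulr_natl.
  apply: le_trans (ler_norm_sum _ _ _) _; apply: ler_sum => j _.
  rewrite /w normrM; apply: ler_pM; [exact: normr_ge0 | exact: normr_ge0 | exact: hqR | ].
  apply: he; have := ltn_ord j; move: (nat_of_ord j) => jj hjj; clear -hjj hsd; lia.
apply: (le_trans (ler_normB _ _)).
rewrite normrM normrX.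
have hs1 : `|xi| ^+ s <= B by apply: hxi; rewrite /s leq_subr.
have hdR : d%:R <= k.+1%:R :> R by rewrite ler_nat; exact: leqW.
have hk1R : 0 <= k.+1%:R :> R by [].
have B0 : 0 <= B by apply: le_trans B1.
have -> : E * N%:R * del = 2 * k.+1%:R * B * w by rewrite /w /E; ring.
have h1 : `|xi| ^+ s * `|\sum_(j < k.+1) (q j)%:~R * (x0%:~R * xi ^+ j - (xx j)%:~R)| <= B * (k.+1%:R * w).
  by apply: ler_pM => //; rewrite exprn_ge0.
apply: (le_trans (lerD h1 b2)).
have fin : forall (B k1 d w : R), 1 <= B -> d <= k1 -> 0 <= w -> 0 <= k1 ->
   B * (k1 * w) + d * w <= 2 * k1 * B * w.
  move=> B2 k1 d2 w2 hB2 hd2 hw2 hk2.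
  have h1' : 0 <= (B2 - 1) * k1 * w2 by rewrite !mulr_ge0 // subr_ge0.
  have h2' : 0 <= (k1 - d2) * w2 by rewrite mulr_ge0 // subr_ge0.
  nra.
exact: fin.
Qed.

Lemma lam_ge0 (R : realType) (n : nat) (xi : R) : (0 <= lambda_exp n xi)%E.
Proof.
apply: ereal_sup_ge; exists 0%:E => //; exists 0 => //; exact: le0_in.
Qed.

Lemma lam_ub (R : realType) (n : nat) (xi : R) (lam : R) :
  lambda_set n xi lam -> (lam%:E <= lambda_exp n xi)%E.
Proof. by move=> h; apply: ereal_sup_ge; exists lam%:E => //; exists lam. Qed.

Lemma step_ereal (R : realType) (xi : R) (k : nat) : (0 < k)%N ->
  (k%:R%:E * (1 + lambda_exp k xi) <= k.+1%:R%:E * (1 + lambda_exp k.+1 xi))%E.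
Proof.
move=> hk.
have hk0 : 0 < k%:R :> R by rewrite ltr0n.
have hk1 : 0 < k.+1%:R :> R by rewrite ltr0n.
have g1 := lam_ge0 _ k.+1 xi.
case E1 : (lambda_exp k.+1 xi) g1 => [r| |] // g1.
  set b := k.+1%:R * (1 + r) / k%:R - 1.
  have hb : (lambda_exp k xi <= b%:E)%E.
    apply: ge_ereal_sup => _ [lam hlam <-]; rewrite lee_fin.
    rewrite leNgt; apply/negP => hlt.
    have hc : r < (k%:R * lam - 1) / k.+1%:R.
      rewrite ltr_pdivlMr //; move: hlt; rewrite /b ltrBlDr ltr_pdivrMr // => h.
      lra.
    move: hc; set c := (k%:R * lam - 1) / k.+1%:R => hc.
    have hmu : (r + c) / 2 < c by lra.
    have := lam_ub _ _ _ _ (@main_step _ _ _ _ _ hk hlam hmu); rewrite E1 lee_fin; lra.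
  have g0 := lam_ge0 _ k xi.
  case E0 : (lambda_exp k xi) hb g0 => [s| |] // hb g0.
  rewrite -!EFinD -!EFinM lee_fin; rewrite lee_fin in hb.
  have : k%:R * (1 + s) <= k%:R * (1 + b) by apply: ler_wpM2l; [exact: ltW | lra].
  have -> : k%:R * (1 + b) = k.+1%:R * (1 + r).
    by rewrite /b; field; exact: lt0r_neq0.
  by [].
by rewrite addey // mulry gtr0_sg // mul1e leey.
Qed.

Lemma chain (R : realType) (xi : R) (k n : nat) : (0 < k)%N -> (k <= n)%N ->
  (k%:R%:E * (1 + lambda_exp k xi) <= n%:R%:E * (1 + lambda_exp n xi))%E.
Proof.
move=> hk; elim: n => [|n IH] hkn; first by move: hk; rewrite lt0n; move: hkn; rewrite leqn0 => ->.
move: hkn; rewrite leq_eqVlt => /orP[/eqP -> //|]; rewrite ltnS => hkn.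
apply: le_trans (IH hkn) _; apply: step_ereal; exact: leq_trans hk hkn.
Qed.

Local Open Scope ereal_scope.

Theorem theorem2p4 (R : realType) (xi : R) (hxi : transcendental xi) (k : nat)
  (hk : (0 < k)%N) :
  (k%:R%:E * (1 + lambda_exp k xi) <= k.+1%:R%:E * (1 + lambda_exp k.+1 xi))
  /\ (forall n : nat, (k <= n)%N ->
        (k%:R%:E * lambda_exp k xi - n%:R%:E + k%:R%:E) * ((n%:R)^-1)%:E
          <= lambda_exp n xi).
Proof.
split; first exact: step_ereal.
move=> n hkn.
have hn : (0 < n)%N by exact: leq_trans hk hkn.
have hn0 : (0 < n%:R :> R)%R by rewrite ltr0n.
have hk0 : (0 < k%:R :> R)%R by rewrite ltr0n.
have h := chain _ xi _ _ hk hkn.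
have g0 := lam_ge0 _ k xi.
have g1 := lam_ge0 _ n xi.
case En : (lambda_exp n xi) h g1 => [s| |] // h g1; last by rewrite leey.
case Ek : (lambda_exp k xi) h g0 => [r| |] // h g0.
  rewrite -!EFinD -!EFinM lee_fin in h *.
  rewrite lee_fin ler_pdivrMr //.
  nra.
exfalso; move: h.
by rewrite addey // mulry gtr0_sg // mul1e -EFinD -EFinM leye_eq.
Qed.
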